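(* Let $m\ge1$ be an integer. Then: (I) $\sup\{\min_{i\in[0:m]}G_i(\boldsymbol\beta): 0<\beta_1<\cdots<\beta_m<\infty\}=2+2\cos\left(\frac{2\pi}{2m+2}\right)$; (II) $\sup\{\min_{i\in[0:m]}G_i(\boldsymbol\beta): 0<\beta_1<\cdots<\beta_m=\infty\}=2+2\cos\left(\frac{2\pi}{2m+1}\right)$; (III) $\sup\{\min_{i\in[0:m]}G_i(\boldsymbol\beta): 0=\beta_1<\cdots<\beta_m<\infty\}=2+2\cos\left(\frac{2\pi}{2m+1}\right)$; (IV) if $m\ge2$, $\sup\{\min_{i\in[0:m]}G_i(\boldsymbol\beta): 0=\beta_1<\cdots<\beta_m=\infty\}=2+2\cos\left(\frac{2\pi}{2m}\right)$.
   Context: Variables $\beta_i$ take values in the extended half-line $[0,\infty]$ with the conventions $1/0=\infty$, $1/\infty=0$, $x+\infty=\infty$. For $\boldsymbol\beta=(\beta_1,\dots,\beta_m)$ define $G_0(\boldsymbol\beta)=1+\frac{1}{\beta_1}$, $G_i(\boldsymbol\beta)=2+\beta_i+\frac{1}{\beta_{i+1}}$ for $i\in[1:m-1]$, and $G_m(\boldsymbol\beta)=1+\beta_m$. (In the paper, $\sigma_{n,m}$ denotes these optimal values minus $2$.) *)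

(* Defs.v *)
From Stdlib Require Import Reals Lra Lia Arith.
Open Scope R_scope.

(* The extended half-line [0, oo] is modelled as R extended by +oo;
   all values that occur below are >= 0. *)
Inductive ER : Type := Fin (r : R) | PInf.

Definition ER_inv (x : ER) : ER :=
  match x with
  | Fin r => if Req_EM_T r 0 then PInf else Fin (/ r)
  | PInf => Fin 0
  end.

Definition ER_add (x y : ER) : ER :=
  match x, y with
  | Fin a, Fin b => Fin (a + b)
  | _, _ => PInf
  end.

Definition ER_le (x y : ER) : Prop :=
  match x, y with
  | Fin a, Fin b => a <= b
  | _, PInf => True
  | PInf, Fin _ => False
  end.

Definition ER_lt (x y : ER) : Prop := ER_le x y /\ x <> y.

Definition ER_min (x y : ER) : ER :=
  match x, y with
  | Fin a, Fin b => Fin (Rmin a b)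
  | PInf, _ => y
  | _, PInf => x
  end.

(* beta : nat -> ER, only beta 1, ..., beta m are relevant. *)
Definition G (m : nat) (beta : nat -> ER) (i : nat) : ER :=
  if Nat.eqb i 0 then ER_add (Fin 1) (ER_inv (beta 1%nat))
  else if Nat.ltb i m then
    ER_add (ER_add (Fin 2) (beta i)) (ER_inv (beta (S i)))
  else ER_add (Fin 1) (beta m).

Fixpoint minG (m : nat) (beta : nat -> ER) (k : nat) : ER :=
  match k with
  | O => G m beta 0
  | S k' => ER_min (minG m beta k') (G m beta k)
  end.

(* lo < beta_1 < ... < beta_m < hi, where "<" at an endpoint is replaced by
   "=" when the flag is true. *)
Definition chain (m : nat) (beta : nat -> ER)
  (lo_eq : bool) (hi_eq : bool) : Prop :=
  (if lo_eq then beta 1%nat = Fin 0 else ER_lt (Fin 0) (beta 1%nat)) /\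
  (forall i : nat, (1 <= i)%nat -> (i < m)%nat -> ER_lt (beta i) (beta (S i))) /\
  (if hi_eq then beta m = PInf else ER_lt (beta m) PInf).

Definition admissible_values (m : nat) (lo_eq hi_eq : bool) (x : ER) : Prop :=
  exists beta : nat -> ER, chain m beta lo_eq hi_eq /\ x = minG m beta m.

Definition ER_is_sup (S : ER -> Prop) (u : ER) : Prop :=
  (forall x, S x -> ER_le x u) /\
  (forall v, (forall x, S x -> ER_le x v) -> ER_le u v).

(* Main.v *)
Require Import Defs.
From Stdlib Require Import Reals Lra Lia Arith Ratan.
Open Scope R_scope.

Definition rp (e : ER) : R := match e with Fin r => r | PInf => 0 end.
Definition wf (th ph : R) (k : nat) : R := sin (INR k * th + ph).

Lemma wf_S th ph k :
  wf th ph (S (S k)) = sin ((INR (S k) * th + ph) + th) /\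
  wf th ph k = sin ((INR (S k) * th + ph) - th).
Proof.
  unfold wf; split; f_equal; rewrite !S_INR; ring.
Qed.

Lemma wf_rec th ph k :
  wf th ph (S (S k)) = 2 * cos th * wf th ph (S k) - wf th ph k.
Proof.
  destruct (wf_S th ph k) as [H1 H2]. rewrite H1, H2.
  unfold wf. rewrite sin_plus, sin_minus. ring.
Qed.

Lemma wf_sq th ph k :
  wf th ph k * wf th ph (S (S k)) = (wf th ph (S k))^2 - (sin th)^2.
Proof.
  destruct (wf_S th ph k) as [H1 H2]. rewrite H1, H2.
  unfold wf. set (A := INR (S k) * th + ph).
  rewrite sin_plus, sin_minus.
  pose proof (sin2_cos2 A). pose proof (sin2_cos2 th). unfold Rsqr in *.
  nra.
Qed.

Lemma wf_pos th ph k : 0 < INR k * th + ph < PI -> 0 < wf th ph k.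
Proof. intros [H1 H2]. unfold wf. apply sin_gt_0; lra. Qed.

Lemma sum_sin A B : sin A + sin B = 2 * sin ((A + B)/2) * cos ((A - B)/2).
Proof.
  set (M := (A+B)/2). set (D := (A-B)/2).
  assert (HA : A = M + D) by (unfold M, D; field).
  assert (HB : B = M - D) by (unfold M, D; field).
  rewrite HA at 1. rewrite HB at 1.
  rewrite sin_plus, sin_minus. ring.
Qed.

Lemma sum_sin_pos A B : 0 < A + B < 2 * PI -> - PI < A - B < PI -> 0 < sin A + sin B.
Proof.
  intros H1 H2. rewrite sum_sin.
  assert (0 < sin ((A+B)/2)) by (apply sin_gt_0; lra).
  assert (0 < cos ((A-B)/2)) by (apply cos_gt_0; lra).
  nra.
Qed.

Lemma sum_sin_zero A B : (A + B)/2 = PI -> sin A + sin B = 0.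
Proof. intros H. rewrite sum_sin, H, sin_PI. ring. Qed.

Lemma theta_from T c : 0 < T < PI -> 2 + 2 * cos T < c < 4 ->
  exists th, 0 < th < T /\ c - 2 = 2 * cos th.
Proof.
  intros HT Hc.
  pose proof (COS_bound T) as [Hb1 Hb2].
  assert (Hr : -1 < (c-2)/2 < 1) by lra.
  exists (acos ((c-2)/2)).
  pose proof (acos_bound_lt _ Hr) as Ha.
  pose proof (cos_acos ((c-2)/2) ltac:(lra)) as Hca.
  split; [|lra]. split; [lra|].
  apply cos_decreasing_0; lra.
Qed.

Lemma chain_bound s (w x : nat -> R) a n :
 (forall k, w (S (S k)) = s * w (S k) - w k) ->
 w (S a) * x a <= w a ->
 (forall k, (k < n)%nat -> s <= x (a+k)%nat + / x (S (a+k)) /\ 0 < x (S (a+k))) ->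
 (forall k, (k <= n)%nat -> 0 < w (S (a+k))) ->
 w (S (a+n)) * x (a+n)%nat <= w (a+n)%nat.
Proof.
  intros Hrec Hb. induction n as [|n IH]; intros Hst Hpos.
  - rewrite Nat.add_0_r. exact Hb.
  - assert (IH' := IH (fun k hk => Hst k ltac:(lia)) (fun k hk => Hpos k ltac:(lia))).
    destruct (Hst n ltac:(lia)) as [Hs Hy].
    assert (Hq := Hpos n ltac:(lia)). assert (Hr := Hpos (S n) ltac:(lia)).
    replace (a + S n)%nat with (S (a+n)) in * by lia.
    rewrite Hrec in *.
    set (y := x (S (a+n))) in *. set (z := / y).
    assert (Hyz : y * z = 1) by (unfold z; field; lra).
    set (q := w (S (a+n))) in *. set (p := w (a+n)%nat) in *.
    set (xj := x (a+n)%nat) in *.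
    change (s <= xj + z) in Hs.
    assert (H1 : s * q <= q * xj + q * z) by nra.
    assert (H2 : (s*q - p) * y <= (q*xj + q*z - p) * y) by (apply Rmult_le_compat_r; lra).
    assert (H3 : (q*xj - p) * y <= 0) by (assert (0 <= (p - q*xj) * y) by (apply Rmult_le_pos; lra); lra).
    nra.
Qed.

Lemma lt_fin a b : ER_lt a b -> a = Fin (rp a).
Proof. destruct a, b; unfold ER_lt; simpl; intros [H1 H2]; try tauto; congruence. Qed.

Lemma lt_fin2 a b : ER_lt a b -> b = Fin (rp b) -> rp a < rp b.
Proof.
  intros H Hb. pose proof (lt_fin _ _ H) as Ha. destruct H as [H1 H2].
  rewrite Ha, Hb in H1, H2. simpl in *.
  destruct (Req_dec (rp a) (rp b)) as [E|E]; [rewrite E in H2; tauto|lra].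
Qed.

Lemma ER_le_trans a b c : ER_le a b -> ER_le b c -> ER_le a c.
Proof. destruct a, b, c; simpl; intros; try tauto; lra. Qed.

Lemma ER_min_ge c x y : ER_le (Fin c) (ER_min x y) <-> ER_le (Fin c) x /\ ER_le (Fin c) y.
Proof.
  destruct x as [a|], y as [b|]; simpl; try tauto.
  split.
  - intros H. pose proof (Rmin_l a b). pose proof (Rmin_r a b). lra.
  - intros [H1 H2]. apply Rmin_glb; lra.
Qed.

Lemma minG_G m beta c k : ER_le (Fin c) (minG m beta k) ->
  forall i, (i <= k)%nat -> ER_le (Fin c) (G m beta i).
Proof.
  induction k as [|k IH]; intros H i Hi.
  - replace i with 0%nat by lia. exact H.
  - simpl in H. apply ER_min_ge in H as [H1 H2].
    destruct (Nat.eq_dec i (S k)) as [->|Hne]; [exact H2|].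
    apply IH; [exact H1|lia].
Qed.

Lemma G_minG m beta c k : (forall i, (i <= k)%nat -> ER_le (Fin c) (G m beta i)) ->
  ER_le (Fin c) (minG m beta k).
Proof.
  induction k as [|k IH]; intros H.
  - apply H. lia.
  - simpl. apply ER_min_ge. split; [apply IH; intros; apply H; lia|apply H; lia].
Qed.

Lemma ub_from t U X : t < U -> (forall c, t < c < U -> ER_le (Fin c) X -> False) ->
  ER_le X (Fin t).
Proof.
  intros HU H. destruct X as [r|]; simpl.
  - destruct (Rle_dec r t) as [|Hr]; [assumption|].
    exfalso. apply (H (Rmin r ((t+U)/2))).
    + split; [apply Rmin_glb_lt; lra|]. pose proof (Rmin_r r ((t+U)/2)). lra.
    + simpl. apply Rmin_l.
  - apply (H ((t+U)/2)); simpl; [lra|exact I].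
Qed.

Lemma G0_fin m beta b : beta 1%nat = Fin b -> 0 < b -> G m beta 0 = Fin (1 + / b).
Proof.
  intros H Hb. unfold G. simpl. rewrite H. unfold ER_inv.
  destruct (Req_EM_T b 0); [lra|reflexivity].
Qed.

Lemma G0_inf m beta : beta 1%nat = PInf -> G m beta 0 = Fin (1 + 0).
Proof. intros H. unfold G. simpl. rewrite H. reflexivity. Qed.

Lemma G0_zero m beta : beta 1%nat = Fin 0 -> G m beta 0 = PInf.
Proof.
  intros H. unfold G. simpl. rewrite H. unfold ER_inv.
  destruct (Req_EM_T 0 0); [reflexivity|lra].
Qed.

Lemma Gmid_fin m beta j a b : (1 <= j)%nat -> (j < m)%nat -> beta j = Fin a ->
  beta (S j) = Fin b -> b <> 0 -> G m beta j = Fin (2 + a + / b).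
Proof.
  intros H1 H2 Ha Hb Hb0. unfold G.
  destruct j as [|j]; [lia|]. simpl Nat.eqb.
  replace (Nat.ltb (S j) m) with true by (symmetry; apply Nat.ltb_lt; lia).
  rewrite Ha, Hb. unfold ER_inv. destruct (Req_EM_T b 0); [lra|reflexivity].
Qed.

Lemma Gmid_inf m beta j a : (1 <= j)%nat -> (j < m)%nat -> beta j = Fin a ->
  beta (S j) = PInf -> G m beta j = Fin (2 + a + 0).
Proof.
  intros H1 H2 Ha Hb. unfold G.
  destruct j as [|j]; [lia|]. simpl Nat.eqb.
  replace (Nat.ltb (S j) m) with true by (symmetry; apply Nat.ltb_lt; lia).
  rewrite Ha, Hb. reflexivity.
Qed.

Lemma Gm_fin m beta a : (1 <= m)%nat -> beta m = Fin a -> G m beta m = Fin (1 + a).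
Proof.
  intros H1 Ha. unfold G. destruct m as [|m']; [lia|]. simpl Nat.eqb.
  rewrite Nat.ltb_irrefl. rewrite Ha. reflexivity.
Qed.

Lemma Gm_inf m beta : (1 <= m)%nat -> beta m = PInf -> G m beta m = PInf.
Proof.
  intros H1 Ha. unfold G. destruct m as [|m']; [lia|]. simpl Nat.eqb.
  rewrite Nat.ltb_irrefl. rewrite Ha. reflexivity.
Qed.

Lemma chain_fin m beta lo hi : chain m beta lo hi ->
  forall j, (1 <= j)%nat -> (j < m)%nat -> beta j = Fin (rp (beta j)).
Proof. intros [_ [H _]] j H1 H2. exact (lt_fin _ _ (H j H1 H2)). Qed.

Lemma chain_fin_m m beta lo : chain m beta lo false -> beta m = Fin (rp (beta m)).
Proof. intros [_ [_ H]]. exact (lt_fin _ _ H). Qed.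

Lemma chain_inf_m m beta lo : chain m beta lo true -> beta m = PInf.
Proof. intros [_ [_ H]]. exact H. Qed.

Lemma chain_mono m beta lo hi : chain m beta lo hi ->
  forall j, (2 <= j <= m)%nat -> beta j = Fin (rp (beta j)) ->
  rp (beta 1%nat) < rp (beta j).
Proof.
  intros Hc. pose proof Hc as [_ [Hm _]].
  induction j as [|j IH]; intros Hj Hf; [lia|].
  destruct (Nat.eq_dec j 1) as [->|Hne].
  - apply lt_fin2; [apply Hm; lia|exact Hf].
  - assert (Hlt : rp (beta j) < rp (beta (S j))) by (apply lt_fin2; [apply Hm; lia|exact Hf]).
    assert (rp (beta 1%nat) < rp (beta j)); [|lra].
    apply IH; [lia|]. apply (chain_fin _ _ _ _ Hc); lia.
Qed.

Lemma chain_pos_lf m beta hi : chain m beta false hi ->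
  forall j, (1 <= j <= m)%nat -> beta j = Fin (rp (beta j)) -> 0 < rp (beta j).
Proof.
  intros Hc j Hj Hf. pose proof Hc as [H0 _]. simpl in H0.
  destruct (Nat.eq_dec j 1) as [->|Hne].
  - apply (lt_fin2 _ _ H0 Hf).
  - assert (Hf1 : beta 1%nat = Fin (rp (beta 1%nat))) by (apply (chain_fin _ _ _ _ Hc); lia).
    pose proof (lt_fin2 _ _ H0 Hf1). simpl in *.
    pose proof (chain_mono _ _ _ _ Hc j ltac:(lia) Hf). lra.
Qed.

Lemma chain_pos_lt m beta hi : chain m beta true hi ->
  forall j, (2 <= j <= m)%nat -> beta j = Fin (rp (beta j)) -> 0 < rp (beta j).
Proof.
  intros Hc j Hj Hf. pose proof Hc as [H0 _]. simpl in H0.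
  pose proof (chain_mono _ _ _ _ Hc j Hj Hf). rewrite H0 in H. simpl in H. exact H.
Qed.

Lemma ub1 m beta (hm : (1 <= m)%nat) (Hc : chain m beta false false) T c :
  T = 2*PI/(2*INR m+2) -> 2 + 2*cos T < c < 4 ->
  (forall i, (i <= m)%nat -> ER_le (Fin c) (G m beta i)) -> False.
Proof.
  intros HT Hcr HG.
  pose proof PI_RGT_0 as Hpi.
  assert (Hm1 : 1 <= INR m) by (apply (le_INR 1); lia).
  assert (HTm : T * (2 * INR m + 2) = 2 * PI) by (rewrite HT; field; lra).
  assert (HTb : 0 < T < PI).
  { rewrite HT. split; [apply Rdiv_lt_0_compat; lra|].
    apply Rmult_lt_reg_r with (2*INR m+2); [lra|]. unfold Rdiv.
    rewrite Rmult_assoc, Rinv_l; nra. }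
  destruct (theta_from T c HTb Hcr) as [th [Hth Hs]].
  assert (Hang : th * (2*INR m + 2) < 2*PI) by nra.
  set (s := c - 2).
  set (w := wf th (-(th/2))).
  set (x := fun j => if Nat.eqb j 0 then -1 else rp (beta j)).
  assert (Hfin : forall j, (1 <= j <= m)%nat -> beta j = Fin (rp (beta j))).
  { intros j Hj. destruct (Nat.eq_dec j m) as [->|Hne].
    - exact (chain_fin_m _ _ _ Hc).
    - apply (chain_fin _ _ _ _ Hc); lia. }
  assert (Hxp : forall j, (1 <= j <= m)%nat -> 0 < rp (beta j)).
  { intros j Hj. apply (chain_pos_lf _ _ _ Hc j Hj (Hfin j Hj)). }
  assert (Hrec : forall k, w (S (S k)) = s * w (S k) - w k).
  { intros k. unfold w. rewrite wf_rec. unfold s. rewrite Hs. ring. }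
  assert (Hwp : forall k, (k <= m)%nat -> 0 < w (S k)).
  { intros k Hk. unfold w. apply wf_pos. rewrite S_INR.
    assert (0 <= INR k <= INR m) by (split; [apply pos_INR|apply le_INR; lia]).
    split; nra. }
  assert (Hkey := chain_bound s w x 0 m Hrec).
  rewrite !Nat.add_0_l in Hkey.
  assert (Hxm : x m = rp (beta m)).
  { unfold x. destruct (Nat.eqb m 0) eqn:E; [apply Nat.eqb_eq in E; lia|reflexivity]. }
  rewrite Hxm in Hkey.
  assert (Hk : w (S m) * rp (beta m) <= w m).
  { apply Hkey.
    - unfold w, wf, x. simpl Nat.eqb.
      replace (INR 1 * th + - (th/2)) with (th/2) by (rewrite INR_1; field).
      replace (INR 0 * th + - (th/2)) with (-(th/2)) by (rewrite INR_0; field).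
      rewrite sin_neg. cbv iota. lra.
    - intros k Hk. rewrite Nat.add_0_l. unfold x. simpl Nat.eqb. cbv iota beta.
      split; [|apply Hxp; lia].
      destruct k as [|k].
      + simpl Nat.eqb. cbv iota.
        assert (H0 := HG 0%nat ltac:(lia)).
        rewrite (G0_fin m beta (rp (beta 1%nat)) (Hfin 1%nat ltac:(lia)) (Hxp 1%nat ltac:(lia))) in H0.
        simpl in H0. unfold s. lra.
      + simpl Nat.eqb. cbv iota.
        assert (H0 := HG (S k) ltac:(lia)).
        rewrite (Gmid_fin m beta (S k) (rp (beta (S k))) (rp (beta (S (S k)))) ltac:(lia) ltac:(lia)
          (Hfin (S k) ltac:(lia)) (Hfin (S (S k)) ltac:(lia))) in H0.
        * simpl in H0. unfold s. lra.
        * pose proof (Hxp (S (S k)) ltac:(lia)). lra.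
    - intros k Hk. apply Hwp. lia. }
  assert (Hm := HG m ltac:(lia)).
  rewrite (Gm_fin m beta (rp (beta m)) hm (Hfin m ltac:(lia))) in Hm. simpl in Hm.
  assert (Hsum : 0 < w (S (S m)) + w (S m)).
  { unfold w, wf. apply sum_sin_pos; rewrite !S_INR; split; nra. }
  rewrite Hrec in Hsum.
  assert (Hw1 := Hwp m ltac:(lia)).
  assert (w (S m) * (s + 1) <= w (S m) * rp (beta m)) by (apply Rmult_le_compat_l; unfold s; lra).
  nra.
Qed.

Lemma ub2 m beta (hm : (1 <= m)%nat) (Hc : chain m beta false true) T c :
  T = 2*PI/(2*INR m+1) -> 2 + 2*cos T < c < 4 ->
  (forall i, (i <= m)%nat -> ER_le (Fin c) (G m beta i)) -> False.
Proof.
  intros HT Hcr HG.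
  pose proof PI_RGT_0 as Hpi.
  assert (Hm1 : 1 <= INR m) by (apply (le_INR 1); lia).
  assert (HTm : T * (2 * INR m + 1) = 2 * PI) by (rewrite HT; field; lra).
  assert (HTb : 0 < T < PI).
  { rewrite HT. split; [apply Rdiv_lt_0_compat; lra|].
    apply Rmult_lt_reg_r with (2*INR m+1); [lra|]. unfold Rdiv.
    rewrite Rmult_assoc, Rinv_l; nra. }
  destruct (theta_from T c HTb Hcr) as [th [Hth Hs]].
  assert (Hang : th * (2*INR m + 1) < 2*PI) by nra.
  set (s := c - 2).
  set (w := wf th (-(th/2))).
  set (x := fun j => if Nat.eqb j 0 then -1 else rp (beta j)).
  assert (Hfin : forall j, (1 <= j < m)%nat -> beta j = Fin (rp (beta j))).
  { intros j Hj. apply (chain_fin _ _ _ _ Hc); lia. }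
  assert (Hxp : forall j, (1 <= j < m)%nat -> 0 < rp (beta j)).
  { intros j Hj. apply (chain_pos_lf _ _ _ Hc j ltac:(lia) (Hfin j Hj)). }
  assert (Hrec : forall k, w (S (S k)) = s * w (S k) - w k).
  { intros k. unfold w. rewrite wf_rec. unfold s. rewrite Hs. ring. }
  assert (Hwp : forall k, (k <= m)%nat -> 0 < w (S k)).
  { intros k Hk. unfold w. apply wf_pos. rewrite S_INR.
    assert (0 <= INR k <= INR m) by (split; [apply pos_INR|apply le_INR; lia]).
    split; nra. }
  destruct m as [|p]; [lia|].
  assert (Hkey := chain_bound s w x 0 p Hrec).
  rewrite !Nat.add_0_l in Hkey.
  assert (Hk : w (S p) * x p <= w p).
  { apply Hkey.
    - unfold w, wf, x. simpl Nat.eqb.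
      replace (INR 1 * th + - (th/2)) with (th/2) by (rewrite INR_1; field).
      replace (INR 0 * th + - (th/2)) with (-(th/2)) by (rewrite INR_0; field).
      rewrite sin_neg. cbv iota. lra.
    - intros k Hk. rewrite Nat.add_0_l. unfold x. simpl Nat.eqb. cbv iota beta.
      split; [|apply Hxp; lia].
      destruct k as [|k].
      + simpl Nat.eqb. cbv iota.
        assert (H0 := HG 0%nat ltac:(lia)).
        rewrite (G0_fin (S p) beta (rp (beta 1%nat)) (Hfin 1%nat ltac:(lia)) (Hxp 1%nat ltac:(lia))) in H0.
        simpl in H0. unfold s. lra.
      + simpl Nat.eqb. cbv iota.
        assert (H0 := HG (S k) ltac:(lia)).
        rewrite (Gmid_fin (S p) beta (S k) (rp (beta (S k))) (rp (beta (S (S k)))) ltac:(lia) ltac:(lia)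
          (Hfin (S k) ltac:(lia)) (Hfin (S (S k)) ltac:(lia))) in H0.
        * simpl in H0. unfold s. lra.
        * pose proof (Hxp (S (S k)) ltac:(lia)). lra.
    - intros k Hk. apply Hwp. lia. }
  assert (Hend : s <= x p).
  { pose proof (chain_inf_m _ _ _ Hc) as Hinf.
    destruct p as [|p'].
    - assert (H0 := HG 0%nat ltac:(lia)). rewrite (G0_inf _ _ Hinf) in H0.
      simpl in H0. unfold x; simpl. unfold s. lra.
    - assert (H0 := HG (S p') ltac:(lia)).
      rewrite (Gmid_inf (S (S p')) beta (S p') (rp (beta (S p'))) ltac:(lia) ltac:(lia)
          (Hfin (S p') ltac:(lia)) Hinf) in H0.
      simpl in H0. unfold x. simpl Nat.eqb. cbv iota. unfold s. lra. }
  assert (Hw1 := Hwp p ltac:(lia)).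
  assert (Hw2 := Hwp (S p) ltac:(lia)).
  rewrite Hrec in Hw2.
  assert (w (S p) * s <= w (S p) * x p) by (apply Rmult_le_compat_l; lra).
  nra.
Qed.

Lemma ub3 m beta (hm : (1 <= m)%nat) (Hc : chain m beta true false) T c :
  T = 2*PI/(2*INR m+1) -> 2 + 2*cos T < c < 4 ->
  (forall i, (i <= m)%nat -> ER_le (Fin c) (G m beta i)) -> False.
Proof.
  intros HT Hcr HG.
  pose proof PI_RGT_0 as Hpi.
  assert (Hm1 : 1 <= INR m) by (apply (le_INR 1); lia).
  assert (HTm : T * (2 * INR m + 1) = 2 * PI) by (rewrite HT; field; lra).
  assert (HTb : 0 < T < PI).
  { rewrite HT. split; [apply Rdiv_lt_0_compat; lra|].
    apply Rmult_lt_reg_r with (2*INR m+1); [lra|]. unfold Rdiv.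
    rewrite Rmult_assoc, Rinv_l; nra. }
  destruct (theta_from T c HTb Hcr) as [th [Hth Hs]].
  assert (Hang : th * (2*INR m + 1) < 2*PI) by nra.
  set (s := c - 2).
  set (w := wf th (-th)).
  set (x := fun j => rp (beta j)).
  assert (Hfin : forall j, (1 <= j <= m)%nat -> beta j = Fin (rp (beta j))).
  { intros j Hj. destruct (Nat.eq_dec j m) as [->|Hne].
    - exact (chain_fin_m _ _ _ Hc).
    - apply (chain_fin _ _ _ _ Hc); lia. }
  assert (Hxp : forall j, (2 <= j <= m)%nat -> 0 < rp (beta j)).
  { intros j Hj. apply (chain_pos_lt _ _ _ Hc j Hj (Hfin j ltac:(lia))). }
  assert (Hrec : forall k, w (S (S k)) = s * w (S k) - w k).
  { intros k. unfold w. rewrite wf_rec. unfold s. rewrite Hs. ring. }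
  assert (Hwp : forall k, (1 <= k <= m)%nat -> 0 < w (S k)).
  { intros k Hk. unfold w. apply wf_pos. rewrite S_INR.
    assert (1 <= INR k <= INR m) by (split; [apply (le_INR 1)|apply le_INR]; lia).
    split; nra. }
  destruct m as [|p]; [lia|].
  assert (Hkey := chain_bound s w x 1 p Hrec).
  assert (Hk : w (S (S p)) * x (S p) <= w (S p)).
  { apply Hkey.
    - pose proof Hc as [H0 _]. simpl in H0. unfold x. rewrite H0. simpl.
      unfold w, wf. replace (INR 1 * th + - th) with 0 by (rewrite INR_1; ring).
      rewrite sin_0. lra.
    - intros k Hk. unfold x.
      split; [|apply Hxp; lia].
      assert (H0 := HG (1 + k)%nat ltac:(lia)).
      rewrite (Gmid_fin (S p) beta (1+k) (rp (beta (1+k)%nat)) (rp (beta (S (1+k)))) ltac:(lia) ltac:(lia)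
          (Hfin (1+k)%nat ltac:(lia)) (Hfin (S (1+k)) ltac:(lia))) in H0.
      * simpl in H0 |- *. unfold s. lra.
      * pose proof (Hxp (S (1+k)) ltac:(lia)). lra.
    - intros k Hk. apply Hwp. lia. }
  assert (Hm := HG (S p) ltac:(lia)).
  rewrite (Gm_fin (S p) beta (rp (beta (S p))) hm (Hfin (S p) ltac:(lia))) in Hm. simpl in Hm.
  assert (Hsum : 0 < w (S (S (S p))) + w (S (S p))).
  { unfold w, wf. apply sum_sin_pos; rewrite !S_INR in *; split; nra. }
  rewrite Hrec in Hsum.
  assert (Hw1 := Hwp (S p) ltac:(lia)).
  assert (w (S (S p)) * (s + 1) <= w (S (S p)) * x (S p)) by (apply Rmult_le_compat_l; unfold s, x; lra).
  nra.
Qed.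

Lemma ub4 m beta (hm : (2 <= m)%nat) (Hc : chain m beta true true) T c :
  T = 2*PI/(2*INR m) -> 2 + 2*cos T < c < 4 ->
  (forall i, (i <= m)%nat -> ER_le (Fin c) (G m beta i)) -> False.
Proof.
  intros HT Hcr HG.
  pose proof PI_RGT_0 as Hpi.
  assert (Hm1 : 2 <= INR m) by (apply (le_INR 2); lia).
  assert (HTm : T * (2 * INR m) = 2 * PI) by (rewrite HT; field; lra).
  assert (HTb : 0 < T < PI).
  { rewrite HT. split; [apply Rdiv_lt_0_compat; lra|].
    apply Rmult_lt_reg_r with (2*INR m); [lra|]. unfold Rdiv.
    rewrite Rmult_assoc, Rinv_l; nra. }
  destruct (theta_from T c HTb Hcr) as [th [Hth Hs]].
  assert (Hang : th * (2*INR m) < 2*PI) by nra.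
  set (s := c - 2).
  set (w := wf th (-th)).
  set (x := fun j => rp (beta j)).
  assert (Hfin : forall j, (1 <= j < m)%nat -> beta j = Fin (rp (beta j))).
  { intros j Hj. apply (chain_fin _ _ _ _ Hc); lia. }
  assert (Hxp : forall j, (2 <= j < m)%nat -> 0 < rp (beta j)).
  { intros j Hj. apply (chain_pos_lt _ _ _ Hc j ltac:(lia) (Hfin j ltac:(lia))). }
  assert (Hrec : forall k, w (S (S k)) = s * w (S k) - w k).
  { intros k. unfold w. rewrite wf_rec. unfold s. rewrite Hs. ring. }
  assert (Hwp : forall k, (1 <= k <= m)%nat -> 0 < w (S k)).
  { intros k Hk. unfold w. apply wf_pos. rewrite S_INR.
    assert (1 <= INR k <= INR m) by (split; [apply (le_INR 1)|apply le_INR]; lia).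
    split; nra. }
  destruct m as [|[|p]]; [lia|lia|].
  assert (Hkey := chain_bound s w x 1 p Hrec).
  assert (Hk : w (S (S p)) * x (S p) <= w (S p)).
  { apply Hkey.
    - pose proof Hc as [H0 _]. simpl in H0. unfold x. rewrite H0. simpl.
      unfold w, wf. replace (INR 1 * th + - th) with 0 by (rewrite INR_1; ring).
      rewrite sin_0. lra.
    - intros k Hk. unfold x.
      split; [|apply Hxp; lia].
      assert (H0 := HG (1 + k)%nat ltac:(lia)).
      rewrite (Gmid_fin (S (S p)) beta (1+k) (rp (beta (1+k)%nat)) (rp (beta (S (1+k)))) ltac:(lia) ltac:(lia)
          (Hfin (1+k)%nat ltac:(lia)) (Hfin (S (1+k)) ltac:(lia))) in H0.
      * simpl in H0 |- *. unfold s. lra.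
      * pose proof (Hxp (S (1+k)) ltac:(lia)). lra.
    - intros k Hk. apply Hwp. lia. }
  assert (Hend : s <= x (S p)).
  { pose proof (chain_inf_m _ _ _ Hc) as Hinf.
    assert (H0 := HG (S p) ltac:(lia)).
    rewrite (Gmid_inf (S (S p)) beta (S p) (rp (beta (S p))) ltac:(lia) ltac:(lia)
          (Hfin (S p) ltac:(lia)) Hinf) in H0.
    simpl in H0. unfold x. unfold s. lra. }
  assert (Hw1 := Hwp (S p) ltac:(lia)).
  assert (Hw2 : 0 < w (S (S (S p)))).
  { unfold w. apply wf_pos. rewrite !S_INR in *. split; nra. }
  rewrite Hrec in Hw2.
  assert (w (S (S p)) * s <= w (S (S p)) * x (S p)) by (apply Rmult_le_compat_l; lra).
  nra.
Qed.

Lemma ratio_lt a b c : 0 <= a -> 0 < b -> 0 < c -> a * c < b * b -> a / b < b / c.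
Proof.
  intros Ha Hb Hc H.
  assert (b / c - a / b = (b*b - a*c) / (b*c)) by (field; lra).
  assert (0 < (b*b - a*c) / (b*c)) by (apply Rdiv_lt_0_compat; nra).
  lra.
Qed.

Lemma Flt a b : a < b -> ER_lt (Fin a) (Fin b).
Proof. intros H. split; [simpl; lra|]. intros E. injection E. lra. Qed.

Lemma Flt_inf a : ER_lt (Fin a) PInf.
Proof. split; [exact I|discriminate]. Qed.

Lemma wf_ratio_lt th ph i : 0 < th < PI -> 0 <= wf th ph i -> 0 < wf th ph (S i) ->
  0 < wf th ph (S (S i)) ->
  wf th ph i / wf th ph (S i) < wf th ph (S i) / wf th ph (S (S i)).
Proof.
  intros Hth H1 H2 H3. apply ratio_lt; auto.
  rewrite wf_sq. assert (0 < sin th) by (apply sin_gt_0; lra). nra.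
Qed.

Lemma H_mid th ph i : wf th ph (S i) <> 0 -> wf th ph (S (S i)) <> 0 ->
  wf th ph i / wf th ph (S i) + / (wf th ph (S i) / wf th ph (S (S i))) = 2 * cos th.
Proof.
  intros H1 H2.
  assert (E : wf th ph i / wf th ph (S i) + / (wf th ph (S i) / wf th ph (S (S i)))
           = (wf th ph i + wf th ph (S (S i))) / wf th ph (S i)) by (field; auto).
  rewrite E. rewrite (wf_rec th ph i). field. auto.
Qed.

Lemma H_midinf th ph i : wf th ph (S i) <> 0 -> wf th ph (S (S i)) = 0 ->
  wf th ph i / wf th ph (S i) = 2 * cos th.
Proof.
  intros H1 H2. rewrite wf_rec in H2.
  replace (wf th ph i) with (2 * cos th * wf th ph (S i)) by lra. field. auto.
Qed.

Lemma H_end th ph m : wf th ph (S m) <> 0 -> wf th ph (S (S m)) + wf th ph (S m) = 0 ->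
  wf th ph m / wf th ph (S m) = 2 * cos th + 1.
Proof.
  intros H1 H2. rewrite wf_rec in H2.
  replace (wf th ph m) with ((2 * cos th + 1) * wf th ph (S m)) by lra. field. auto.
Qed.

Lemma H_start th : wf th (-(th/2)) 1 <> 0 -> wf th (-(th/2)) 2 <> 0 ->
  / (wf th (-(th/2)) 1 / wf th (-(th/2)) 2) = 2 * cos th + 1.
Proof.
  intros H1 H2.
  assert (E0 : wf th (-(th/2)) 0 = - wf th (-(th/2)) 1).
  { unfold wf. replace (INR 0 * th + - (th/2)) with (- (INR 1 * th + - (th/2)))
      by (rewrite INR_0, INR_1; field). apply sin_neg. }
  replace (/ (wf th (-(th/2)) 1 / wf th (-(th/2)) 2)) with (wf th (-(th/2)) 2 / wf th (-(th/2)) 1)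
    by (field; auto).
  rewrite (wf_rec th (-(th/2)) 0). rewrite E0. field. auto.
Qed.

Lemma ach1 m (hm : (1 <= m)%nat) : exists beta, chain m beta false false /\
  ER_le (Fin (2 + 2 * cos (2 * PI / (2 * INR m + 2)))) (minG m beta m).
Proof.
  set (T := 2 * PI / (2 * INR m + 2)).
  pose proof PI_RGT_0 as Hpi.
  assert (Hm1 : 1 <= INR m) by (apply (le_INR 1); lia).
  assert (HTm : T * (2 * INR m + 2) = 2 * PI) by (unfold T; field; lra).
  assert (HT0 : 0 < T) by (unfold T; apply Rdiv_lt_0_compat; lra).
  assert (HTb : T < PI) by nra.
  assert (Hwp : forall k, (1 <= k <= S m)%nat -> 0 < wf T (-(T/2)) k).
  { intros k Hk. apply wf_pos.
    assert (1 <= INR k <= INR m + 1) by (rewrite <- S_INR; split; [apply (le_INR 1)|apply le_INR]; lia).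
    split; nra. }
  exists (fun j => Fin (wf T (-(T/2)) j / wf T (-(T/2)) (S j))). split.
  { split; [|split].
    - apply Flt. apply Rdiv_lt_0_compat; apply Hwp; lia.
    - intros i H1 H2. apply Flt. apply wf_ratio_lt; [lra| |apply Hwp; lia|apply Hwp; lia].
      left; apply Hwp; lia.
    - apply Flt_inf. }
  apply G_minG. intros i Hi.
  assert (Hn : forall k, (1 <= k <= S m)%nat -> wf T (-(T/2)) k <> 0) by (intros k Hk; pose proof (Hwp k Hk); lra).
  destruct (Nat.eq_dec i 0) as [->|H0].
  { rewrite (G0_fin m _ (wf T (-(T/2)) 1 / wf T (-(T/2)) 2) eq_refl).
    - simpl. rewrite H_start by (apply Hn; lia). lra.
    - apply Rdiv_lt_0_compat; apply Hwp; lia. }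
  destruct (Nat.eq_dec i m) as [->|Hne].
  { rewrite (Gm_fin m _ _ hm eq_refl). simpl.
    rewrite H_end; [lra|apply Hn; lia|].
    unfold wf. apply sum_sin_zero. rewrite !S_INR. unfold T. field. lra. }
  rewrite (Gmid_fin m _ i _ _ ltac:(lia) ltac:(lia) eq_refl eq_refl).
  - simpl. rewrite Rplus_assoc, H_mid by (apply Hn; lia). lra.
  - assert (0 < wf T (-(T/2)) (S i) / wf T (-(T/2)) (S (S i))) by (apply Rdiv_lt_0_compat; apply Hwp; lia). lra.
Qed.

Lemma ach2 m (hm : (1 <= m)%nat) : exists beta, chain m beta false true /\
  ER_le (Fin (2 + 2 * cos (2 * PI / (2 * INR m + 1)))) (minG m beta m).
Proof.
  set (T := 2 * PI / (2 * INR m + 1)).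
  pose proof PI_RGT_0 as Hpi.
  assert (Hm1 : 1 <= INR m) by (apply (le_INR 1); lia).
  assert (HTm : T * (2 * INR m + 1) = 2 * PI) by (unfold T; field; lra).
  assert (HT0 : 0 < T) by (unfold T; apply Rdiv_lt_0_compat; lra).
  assert (HTb : T < PI) by nra.
  assert (Hwp : forall k, (1 <= k <= m)%nat -> 0 < wf T (-(T/2)) k).
  { intros k Hk. apply wf_pos.
    assert (1 <= INR k <= INR m) by (split; [apply (le_INR 1)|apply le_INR]; lia).
    split; nra. }
  assert (Hn : forall k, (1 <= k <= m)%nat -> wf T (-(T/2)) k <> 0) by (intros k Hk; pose proof (Hwp k Hk); lra).
  assert (Hz : wf T (-(T/2)) (S m) = 0).
  { unfold wf. replace (INR (S m) * T + - (T/2)) with PI by (rewrite S_INR; unfold T; field; lra).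
    apply sin_PI. }
  set (beta := fun j => if Nat.eqb j m then PInf else Fin (wf T (-(T/2)) j / wf T (-(T/2)) (S j))).
  assert (Hbm : beta m = PInf) by (unfold beta; rewrite Nat.eqb_refl; reflexivity).
  assert (Hbj : forall j, j <> m -> beta j = Fin (wf T (-(T/2)) j / wf T (-(T/2)) (S j))).
  { intros j Hj. unfold beta. apply Nat.eqb_neq in Hj. rewrite Hj. reflexivity. }
  exists beta. split.
  { split; [|split].
    - destruct (Nat.eq_dec 1 m) as [E|E].
      + rewrite <- E in Hbm. rewrite Hbm. apply Flt_inf.
      + rewrite Hbj by exact E. apply Flt. apply Rdiv_lt_0_compat; apply Hwp; lia.
    - intros i H1 H2. rewrite Hbj by lia.
      destruct (Nat.eq_dec (S i) m) as [E|E].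
      + rewrite E, Hbm. apply Flt_inf.
      + rewrite Hbj by exact E. apply Flt.
        apply wf_ratio_lt; [lra| |apply Hwp; lia|apply Hwp; lia]. left; apply Hwp; lia.
    - exact Hbm. }
  apply G_minG. intros i Hi.
  destruct (Nat.eq_dec i 0) as [->|H0].
  { destruct (Nat.eq_dec 1 m) as [E|E].
    - rewrite <- E in Hbm. rewrite (G0_inf m _ Hbm). simpl.
      rewrite <- E in Hz. rewrite (wf_rec T (-(T/2)) 0) in Hz.
      assert (E0 : wf T (-(T/2)) 0 = - wf T (-(T/2)) 1).
      { unfold wf. replace (INR 0 * T + - (T/2)) with (- (INR 1 * T + - (T/2)))
          by (rewrite INR_0, INR_1; field). apply sin_neg. }
      rewrite E0 in Hz. assert (H1 := Hwp 1%nat ltac:(lia)). nra.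
    - rewrite (G0_fin m _ (wf T (-(T/2)) 1 / wf T (-(T/2)) 2) (Hbj 1%nat E)).
      + simpl. rewrite H_start by (apply Hn; lia). lra.
      + apply Rdiv_lt_0_compat; apply Hwp; lia. }
  destruct (Nat.eq_dec i m) as [->|Hne].
  { rewrite (Gm_inf m _ hm Hbm). exact I. }
  destruct (Nat.eq_dec (S i) m) as [E|E].
  - rewrite (Gmid_inf m _ i _ ltac:(lia) ltac:(lia) (Hbj i Hne) ltac:(rewrite E; exact Hbm)).
    simpl. rewrite H_midinf; [lra|apply Hn; lia|rewrite E; exact Hz].
  - rewrite (Gmid_fin m _ i _ _ ltac:(lia) ltac:(lia) (Hbj i Hne) (Hbj (S i) E)).
    + simpl. rewrite Rplus_assoc, H_mid by (apply Hn; lia). lra.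
    + assert (0 < wf T (-(T/2)) (S i) / wf T (-(T/2)) (S (S i))) by (apply Rdiv_lt_0_compat; apply Hwp; lia). lra.
Qed.

Lemma ach3 m (hm : (1 <= m)%nat) : exists beta, chain m beta true false /\
  ER_le (Fin (2 + 2 * cos (2 * PI / (2 * INR m + 1)))) (minG m beta m).
Proof.
  set (T := 2 * PI / (2 * INR m + 1)).
  pose proof PI_RGT_0 as Hpi.
  assert (Hm1 : 1 <= INR m) by (apply (le_INR 1); lia).
  assert (HTm : T * (2 * INR m + 1) = 2 * PI) by (unfold T; field; lra).
  assert (HT0 : 0 < T) by (unfold T; apply Rdiv_lt_0_compat; lra).
  assert (HTb : T < PI) by nra.
  assert (Hwp : forall k, (2 <= k <= S m)%nat -> 0 < wf T (-T) k).
  { intros k Hk. apply wf_pos.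
    assert (2 <= INR k <= INR m + 1) by (rewrite <- S_INR; split; [apply (le_INR 2)|apply le_INR]; lia).
    split; nra. }
  assert (Hn : forall k, (2 <= k <= S m)%nat -> wf T (-T) k <> 0) by (intros k Hk; pose proof (Hwp k Hk); lra).
  assert (Hw1 : wf T (-T) 1 = 0).
  { unfold wf. replace (INR 1 * T + - T) with 0 by (rewrite INR_1; ring). apply sin_0. }
  assert (Hwnn : forall k, (1 <= k <= S m)%nat -> 0 <= wf T (-T) k).
  { intros k Hk. destruct (Nat.eq_dec k 1) as [->|E]; [lra|left; apply Hwp; lia]. }
  exists (fun j => Fin (wf T (-T) j / wf T (-T) (S j))).
  assert (Hb1 : wf T (-T) 1 / wf T (-T) 2 = 0) by (rewrite Hw1; unfold Rdiv; ring).
  split.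
  { split; [|split].
    - cbv beta. rewrite Hb1. reflexivity.
    - intros i H1 H2. apply Flt. apply wf_ratio_lt; [lra|apply Hwnn; lia|apply Hwp; lia|apply Hwp; lia].
    - apply Flt_inf. }
  apply G_minG. intros i Hi.
  destruct (Nat.eq_dec i 0) as [->|H0].
  { rewrite (G0_zero m (fun j => Fin (wf T (-T) j / wf T (-T) (S j))) ltac:(cbv beta; rewrite Hb1; reflexivity)). exact I. }
  destruct (Nat.eq_dec i m) as [->|Hne].
  { rewrite (Gm_fin m _ _ hm eq_refl). simpl.
    rewrite H_end; [lra|apply Hn; lia|].
    unfold wf. apply sum_sin_zero. rewrite !S_INR. unfold T. field. lra. }
  rewrite (Gmid_fin m _ i _ _ ltac:(lia) ltac:(lia) eq_refl eq_refl).
  - simpl. rewrite Rplus_assoc, H_mid by (apply Hn; lia). lra.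
  - assert (0 < wf T (-T) (S i) / wf T (-T) (S (S i))) by (apply Rdiv_lt_0_compat; apply Hwp; lia). lra.
Qed.

Lemma ach4 m (hm : (2 <= m)%nat) : exists beta, chain m beta true true /\
  ER_le (Fin (2 + 2 * cos (2 * PI / (2 * INR m)))) (minG m beta m).
Proof.
  set (T := 2 * PI / (2 * INR m)).
  pose proof PI_RGT_0 as Hpi.
  assert (Hm1 : 2 <= INR m) by (apply (le_INR 2); lia).
  assert (HTm : T * (2 * INR m) = 2 * PI) by (unfold T; field; lra).
  assert (HT0 : 0 < T) by (unfold T; apply Rdiv_lt_0_compat; lra).
  assert (HTb : T < PI) by nra.
  assert (Hwp : forall k, (2 <= k <= m)%nat -> 0 < wf T (-T) k).
  { intros k Hk. apply wf_pos.
    assert (2 <= INR k <= INR m) by (split; [apply (le_INR 2)|apply le_INR]; lia).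
    split; nra. }
  assert (Hn : forall k, (2 <= k <= m)%nat -> wf T (-T) k <> 0) by (intros k Hk; pose proof (Hwp k Hk); lra).
  assert (Hw1 : wf T (-T) 1 = 0).
  { unfold wf. replace (INR 1 * T + - T) with 0 by (rewrite INR_1; ring). apply sin_0. }
  assert (Hwnn : forall k, (1 <= k <= m)%nat -> 0 <= wf T (-T) k).
  { intros k Hk. destruct (Nat.eq_dec k 1) as [->|E]; [lra|left; apply Hwp; lia]. }
  assert (Hz : wf T (-T) (S m) = 0).
  { unfold wf. replace (INR (S m) * T + - T) with PI by (rewrite S_INR; unfold T; field; lra).
    apply sin_PI. }
  set (beta := fun j => if Nat.eqb j m then PInf else Fin (wf T (-T) j / wf T (-T) (S j))).
  assert (Hbm : beta m = PInf) by (unfold beta; rewrite Nat.eqb_refl; reflexivity).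
  assert (Hbj : forall j, j <> m -> beta j = Fin (wf T (-T) j / wf T (-T) (S j))).
  { intros j Hj. unfold beta. apply Nat.eqb_neq in Hj. rewrite Hj. reflexivity. }
  assert (Hb1 : beta 1%nat = Fin 0).
  { rewrite Hbj by lia. rewrite Hw1. f_equal. unfold Rdiv. ring. }
  exists beta. split.
  { split; [|split].
    - exact Hb1.
    - intros i H1 H2. rewrite Hbj by lia.
      destruct (Nat.eq_dec (S i) m) as [E|E].
      + rewrite E, Hbm. apply Flt_inf.
      + rewrite Hbj by exact E. apply Flt.
        apply wf_ratio_lt; [lra|apply Hwnn; lia|apply Hwp; lia|apply Hwp; lia].
    - exact Hbm. }
  apply G_minG. intros i Hi.
  destruct (Nat.eq_dec i 0) as [->|H0].
  { rewrite (G0_zero m _ Hb1). exact I. }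
  destruct (Nat.eq_dec i m) as [->|Hne].
  { rewrite (Gm_inf m _ ltac:(lia) Hbm). exact I. }
  destruct (Nat.eq_dec (S i) m) as [E|E].
  - rewrite (Gmid_inf m _ i _ ltac:(lia) ltac:(lia) (Hbj i Hne) ltac:(rewrite E; exact Hbm)).
    simpl. rewrite H_midinf; [lra|apply Hn; lia|rewrite E; exact Hz].
  - rewrite (Gmid_fin m _ i _ _ ltac:(lia) ltac:(lia) (Hbj i Hne) (Hbj (S i) E)).
    + simpl. rewrite Rplus_assoc, H_mid by (apply Hn; lia). lra.
    + assert (0 < wf T (-T) (S i) / wf T (-T) (S (S i))) by (apply Rdiv_lt_0_compat; apply Hwp; lia). lra.
Qed.

Lemma t_lt4 T : 0 < T < PI -> 2 + 2 * cos T < 4.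
Proof.
  intros H. pose proof PI_RGT_0.
  assert (cos T < cos 0) by (apply cos_decreasing_1; lra). rewrite cos_0 in H1. lra.
Qed.

Lemma sup_gen m lo hi t : t < 4 ->
  (forall beta c, chain m beta lo hi -> t < c < 4 ->
     (forall i, (i <= m)%nat -> ER_le (Fin c) (G m beta i)) -> False) ->
  (exists beta, chain m beta lo hi /\ ER_le (Fin t) (minG m beta m)) ->
  ER_is_sup (admissible_values m lo hi) (Fin t).
Proof.
  intros Ht Hub Hach. split.
  - intros x [beta [Hc ->]]. apply ub_from with 4; [lra|].
    intros c Hc' Hle. apply (Hub beta c Hc Hc'). intros i Hi. exact (minG_G _ _ _ _ Hle i Hi).
  - intros v Hv. destruct Hach as [beta [Hc Hle]].
    apply ER_le_trans with (minG m beta m); [exact Hle|]. apply Hv. exists beta. split; auto.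
Qed.

Lemma Tb k d : 0 < k -> 2 < k + d -> 0 <= d -> 0 < 2 * PI / (k + d) < PI.
Proof.
  intros Hk Hkd Hd. pose proof PI_RGT_0. split.
  - apply Rdiv_lt_0_compat; lra.
  - apply Rmult_lt_reg_r with (k + d); [lra|]. unfold Rdiv.
    rewrite Rmult_assoc, Rinv_l; nra.
Qed.

Theorem proposition2 (m : nat) (hm : (1 <= m)%nat) :
  ER_is_sup (admissible_values m false false)
    (Fin (2 + 2 * cos (2 * PI / (2 * INR m + 2)))) /\
  ER_is_sup (admissible_values m false true)
    (Fin (2 + 2 * cos (2 * PI / (2 * INR m + 1)))) /\
  ER_is_sup (admissible_values m true false)
    (Fin (2 + 2 * cos (2 * PI / (2 * INR m + 1)))) /\
  ((2 <= m)%nat ->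
   ER_is_sup (admissible_values m true true)
     (Fin (2 + 2 * cos (2 * PI / (2 * INR m))))).
Proof.
  assert (Hm1 : 1 <= INR m) by (apply (le_INR 1); lia).
  split; [|split; [|split]].
  - apply sup_gen.
    + apply t_lt4, Tb; lra.
    + intros beta c Hc Hcr HG. exact (ub1 m beta hm Hc _ c eq_refl Hcr HG).
    + apply ach1; exact hm.
  - apply sup_gen.
    + apply t_lt4, Tb; lra.
    + intros beta c Hc Hcr HG. exact (ub2 m beta hm Hc _ c eq_refl Hcr HG).
    + apply ach2; exact hm.
  - apply sup_gen.
    + apply t_lt4, Tb; lra.
    + intros beta c Hc Hcr HG. exact (ub3 m beta hm Hc _ c eq_refl Hcr HG).
    + apply ach3; exact hm.
  - intros hm2. assert (Hm2 : 2 <= INR m) by (apply (le_INR 2); lia).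
    apply sup_gen.
    + apply t_lt4. replace (2 * INR m) with (2 * INR m + 0) by ring. apply Tb; lra.
    + intros beta c Hc Hcr HG. exact (ub4 m beta hm2 Hc _ c eq_refl Hcr HG).
    + apply ach4; exact hm2.
Qed.
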